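(* Let $d\in\{2,3\}$, $r>\frac{d+1}{2}$, $\beta>0$, and $\mathbf u,\mathbf v,\mathbf w\in H_{\mathbb C}$ with $\|A^{1/4}\mathbf u\|_\beta,\|A^{1/4}\mathbf v\|_\beta,\|A^{1/4}\mathbf w\|_\beta<\infty$. Then $$|\langle B(\mathbf u,\mathbf v),A^{r}e^{2\beta A^{1/2}}\mathbf w\rangle|\le C\,2^rC_W(r)\Big(\|\mathbf v\|_\beta\|A^{1/4}\mathbf u\|_\beta\|A^{1/4}\mathbf w\|_\beta+\|\mathbf u\|_\beta\|A^{1/4}\mathbf v\|_\beta\|A^{1/4}\mathbf w\|_\beta\Big),$$ with $C>0$ depending only on $d$.
   Context: Periodic domain $\Omega=[0,2\pi]^d$, $H$ = real mean-zero divergence-free $L^2$ vector fields, $H_{\mathbb C}=H+iH$ with sesquilinear $L^2$ inner product. $A=-\Delta$ acts by multiplication by $|\mathbf k|^2$ on Fourier coefficients. $\|\mathbf f\|_\beta=\|A^{r/2}e^{\beta A^{1/2}}\mathbf f\|$. $B(\mathbf u,\mathbf v)=\mathbb P(\mathbf u\cdot\nabla\mathbf v)$, $\mathbb P$ the Leray–Helmholtz projection, extended complex-bilinearly. $C_W(r)=\frac{1}{\pi 2^{d-1}}\frac{2r-d}{2r-1-d}$. *)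

(* Defs.v *)
From Stdlib Require Import Reals Lra List ZArith ClassicalEpsilon.
Open Scope R_scope.

Definition C := (R * R)%type.
Definition C0 : C := (0, 0).
Definition RtoC (x : R) : C := (x, 0).
Definition Ci : C := (0, 1).
Definition Cadd (a b : C) : C := (fst a + fst b, snd a + snd b).
Definition Cmul (a b : C) : C :=
  (fst a * fst b - snd a * snd b, fst a * snd b + snd a * fst b).
Definition Cconj (a : C) : C := (fst a, - snd a).
Definition Cnorm2 (a : C) : R := fst a ^ 2 + snd a ^ 2.
Definition Cmod (a : C) : R := sqrt (Cnorm2 a).

Definition Rsum_range (d : nat) (f : nat -> R) : R :=
  fold_right (fun i acc => f i + acc) 0 (seq 0 d).
Definition Csum_range (d : nat) (f : nat -> C) : C :=
  fold_right (fun i acc => Cadd (f i) acc) C0 (seq 0 d).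

Definition lsum {T : Type} (f : T -> R) (l : list T) : R :=
  fold_right (fun x acc => f x + acc) 0 l.
Definition has_sum {T : Type} (f : T -> R) (S : R) : Prop :=
  forall eps, 0 < eps -> exists F0 : list T,
    forall F : list T, NoDup F -> incl F0 F -> Rabs (lsum f F - S) < eps.
(** The sum of a summable family (0 by convention if not summable). *)
Definition tsum {T : Type} (f : T -> R) : R :=
  match excluded_middle_informative (exists S, has_sum f S) with
  | left H => proj1_sig (constructive_indefinite_description _ H)
  | right _ => 0
  end.
Definition tsumC {T : Type} (f : T -> C) : C :=
  (tsum (fun x => fst (f x)), tsum (fun x => snd (f x))).

Definition Zd (d : nat) := {k : nat -> Z | forall i, (d <= i)%nat -> k i = 0%Z}.
Lemma Zd_sub_proof (d : nat) (k j : Zd d) :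
  forall i, (d <= i)%nat -> (proj1_sig k i - proj1_sig j i)%Z = 0%Z.
Proof. intros i Hi. rewrite (proj2_sig k i Hi), (proj2_sig j i Hi). reflexivity. Qed.
Definition Zd_sub (d : nat) (k j : Zd d) : Zd d :=
  exist _ (fun i => (proj1_sig k i - proj1_sig j i)%Z) (Zd_sub_proof d k j).
Definition Zd_zero (d : nat) : Zd d := exist _ (fun _ => 0%Z) (fun _ _ => eq_refl).
Definition kcomp {d : nat} (k : Zd d) (i : nat) : R := IZR (proj1_sig k i).
Definition knorm2 (d : nat) (k : Zd d) : R := Rsum_range d (fun i => kcomp k i ^ 2).
Definition knorm (d : nat) (k : Zd d) : R := sqrt (knorm2 d k).
(** Apow d k s = |k|^(2 s), the symbol of A^s (set to 0 at k = 0). *)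
Definition Apow (d : nat) (k : Zd d) (s : R) : R :=
  if Req_EM_T (knorm2 d k) 0 then 0 else Rpower (knorm2 d k) s.

(** A complex vector field on [0,2pi]^d, given by its Fourier coefficients
    u = sum_k u k e^{i k.x}; only components 0..d-1 are meaningful. *)
Definition field (d : nat) := Zd d -> nat -> C.

Definition vnorm2 (d : nat) (u : field d) (k : Zd d) : R :=
  Rsum_range d (fun i => Cnorm2 (u k i)).

(** Membership in H_C: square integrable, mean zero, divergence free. *)
Definition in_HC (d : nat) (u : field d) : Prop :=
  (exists S, has_sum (vnorm2 d u) S) /\
  (forall i, (i < d)%nat -> u (Zd_zero d) i = C0) /\
  (forall k, Csum_range d (fun i => Cmul (RtoC (kcomp k i)) (u k i)) = C0).

(** L^2 inner product on [0,2pi]^d (sesquilinear), via Parseval. *)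
Definition inner (d : nat) (f g : field d) : C :=
  Cmul (RtoC ((2 * PI) ^ d))
    (tsumC (fun k => Csum_range d (fun i => Cmul (f k i) (Cconj (g k i))))).

(** Squared summand of || A^a u ||_beta = || A^{r/2 + a} e^{beta A^{1/2}} u ||. *)
Definition gev_term (d : nat) (r beta a : R) (u : field d) (k : Zd d) : R :=
  Apow d k (r + 2 * a) * exp (2 * beta * knorm d k) * vnorm2 d u k.
Definition gev_finite (d : nat) (r beta a : R) (u : field d) : Prop :=
  exists S, has_sum (gev_term d r beta a u) S.
Definition gev_norm (d : nat) (r beta a : R) (u : field d) : R :=
  sqrt ((2 * PI) ^ d * tsum (gev_term d r beta a u)).

(** Leray–Helmholtz projection on the k-th Fourier mode. *)
Definition leray (d : nat) (k : Zd d) (a : nat -> C) : nat -> C :=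
  fun i => if Req_EM_T (knorm2 d k) 0 then C0 else
    Cadd (a i) (Cmul (RtoC (- kcomp k i / knorm2 d k))
                     (Csum_range d (fun m => Cmul (RtoC (kcomp k m)) (a m)))).

(** B(u,v) = P (u . grad v), complex bilinear, on the Fourier side. *)
Definition Bhat (d : nat) (u v : field d) : field d :=
  fun k => leray d k (fun i =>
    tsumC (fun j : Zd d =>
      Cmul Ci (Cmul (Csum_range d (fun m => Cmul (u j m) (RtoC (kcomp (Zd_sub d k j) m))))
                    (v (Zd_sub d k j) i)))).

Definition gev_mult (d : nat) (r beta : R) (w : field d) : field d :=
  fun k i => Cmul (RtoC (Apow d k r * exp (2 * beta * knorm d k))) (w k i).

Definition C_W (d : nat) (r : R) : R :=
  / (PI * 2 ^ (d - 1)) * ((2 * r - INR d) / (2 * r - 1 - INR d)).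

(* Main.v *)
Require Import Defs.
From Stdlib Require Import Reals Lra Lia List ZArith Classical ClassicalEpsilon FunctionalExtensionality.
Open Scope R_scope.


Lemma lsum_nil {T} (f : T -> R) : lsum f nil = 0.
Proof. reflexivity. Qed.
Lemma lsum_cons {T} (f : T -> R) a l : lsum f (a :: l) = f a + lsum f l.
Proof. reflexivity. Qed.
Lemma lsum_app {T} (f : T -> R) l1 l2 : lsum f (l1 ++ l2) = lsum f l1 + lsum f l2.
Proof. induction l1; simpl; [lra|]. unfold lsum in *; simpl. rewrite IHl1. lra. Qed.
Lemma lsum_nonneg {T} (f : T -> R) l : (forall x, 0 <= f x) -> 0 <= lsum f l.
Proof. intros H; induction l; simpl; [lra|]. specialize (H a). unfold lsum in *; simpl; lra. Qed.
Lemma lsum_le {T} (f g : T -> R) l : (forall x, In x l -> f x <= g x) -> lsum f l <= lsum g l.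
Proof. induction l; intros H; simpl; [lra|]. unfold lsum in *; simpl.
  assert (f a <= g a) by (apply H; left; auto).
  assert (fold_right (fun x acc => f x + acc) 0 l <= fold_right (fun x acc => g x + acc) 0 l)
   by (apply IHl; intros; apply H; right; auto). lra. Qed.
Lemma lsum_ext {T} (f g : T -> R) l : (forall x, In x l -> f x = g x) -> lsum f l = lsum g l.
Proof. intros H; apply Rle_antisym; apply lsum_le; intros; rewrite H; auto; lra. Qed.
Lemma lsum_scal {T} (f : T -> R) c l : lsum (fun x => c * f x) l = c * lsum f l.
Proof. induction l; simpl; [lra|]. unfold lsum in *; simpl. rewrite IHl. lra. Qed.
Lemma lsum_plus {T} (f g : T -> R) l : lsum (fun x => f x + g x) l = lsum f l + lsum g l.
Proof. induction l; simpl; [lra|]. unfold lsum in *; simpl. rewrite IHl. lra. Qed.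
Lemma lsum_map {A B} (f : B -> R) (h : A -> B) l : lsum f (map h l) = lsum (fun x => f (h x)) l.
Proof. induction l; simpl; auto. unfold lsum in *; simpl. rewrite IHl. auto. Qed.
Lemma lsum_abs {T} (f : T -> R) l : Rabs (lsum f l) <= lsum (fun x => Rabs (f x)) l.
Proof. induction l; simpl. unfold lsum; simpl; rewrite Rabs_R0; lra.
  unfold lsum in *; simpl. eapply Rle_trans; [apply Rabs_triang|]. lra. Qed.
Lemma lsum_swap {A B} (f : A -> B -> R) l1 l2 :
  lsum (fun x => lsum (fun y => f x y) l2) l1 = lsum (fun y => lsum (fun x => f x y) l1) l2.
Proof. induction l1; simpl.
  - induction l2; unfold lsum in *; simpl; auto. rewrite <- IHl2. lra.
  - unfold lsum in *; simpl. rewrite IHl1. clear IHl1. induction l2; simpl; [lra|].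
    rewrite <- IHl2. lra. Qed.

Lemma lsum_incl {T} (f : T -> R) (F F' : list T) : (forall x, 0 <= f x) ->
  NoDup F -> NoDup F' -> incl F F' -> lsum f F <= lsum f F'.
Proof.
  intros Hf HF; revert F'; induction HF as [|a F Hna HF IH]; intros F' HF' Hi.
  - simpl. apply lsum_nonneg; auto.
  - assert (Ha : In a F') by (apply Hi; left; auto).
    destruct (in_split _ _ Ha) as [l1 [l2 E]]. subst F'.
    rewrite lsum_app, lsum_cons.
    assert (lsum f F <= lsum f (l1 ++ l2)).
    { apply IH. eapply NoDup_remove_1; eauto.
      intros x Hx. assert (In x (l1 ++ a :: l2)) by (apply Hi; right; auto).
      apply in_app_or in H. apply in_or_app. destruct H as [H|H]; auto.
      destruct H; [subst; contradiction|auto]. }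
    rewrite lsum_app in H. simpl. lra.
Qed.

Definition cdec {T : Type} : forall x y : T, {x = y} + {x <> y} :=
  fun x y => excluded_middle_informative (x = y).
Lemma nodup_ex {T} (l : list T) : exists l', NoDup l' /\ incl l l' /\ incl l' l.
Proof. exists (nodup cdec l). split; [apply NoDup_nodup|]. split; intros x Hx; apply nodup_In in Hx || apply nodup_In; auto. Qed.

Lemma map_NoDup_inj {A B} (f : A -> B) l : (forall x y, f x = f y -> x = y) -> NoDup l -> NoDup (map f l).
Proof. intros Hi H; induction H; simpl; constructor; auto.
  intros Hin. apply in_map_iff in Hin. destruct Hin as [y [E Hy]]. apply Hi in E. subst; auto. Qed.

Lemma tsum_spec {T} (f : T -> R) : (exists S, has_sum f S) -> has_sum f (tsum f).
Proof. intros H. unfold tsum. destruct (excluded_middle_informative _); [|contradiction].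
  destruct (constructive_indefinite_description _ e); simpl; auto. Qed.
Lemma tsum_not {T} (f : T -> R) : ~ (exists S, has_sum f S) -> tsum f = 0.
Proof. intros H. unfold tsum. destruct (excluded_middle_informative _); [contradiction|auto]. Qed.

Lemma tsum_approx {T} (f : T -> R) eps : 0 < eps -> exists J0 : list T,
  forall J, NoDup J -> incl J0 J -> Rabs (tsum f) <= lsum (fun x => Rabs (f x)) J + eps.
Proof.
  intros He. destruct (classic (exists S, has_sum f S)) as [Hs|Hs].
  - destruct (tsum_spec f Hs eps He) as [F0 HF0]. exists F0. intros J HJ Hi.
    specialize (HF0 J HJ Hi). pose proof (lsum_abs f J).
    rewrite Rabs_minus_sym in HF0. pose proof (Rabs_triang_inv (tsum f) (lsum f J)). lra.
  - exists nil. intros J _ _. rewrite tsum_not by auto. rewrite Rabs_R0.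
    pose proof (lsum_nonneg (fun x => Rabs (f x)) J (fun x => Rabs_pos _)). lra.
Qed.

Lemma tsum_approx_list {P T} (h : P -> T -> R) (L : list P) eps : 0 < eps -> exists J0 : list T,
  forall J, NoDup J -> incl J0 J -> forall p, In p L ->
    Rabs (tsum (h p)) <= lsum (fun x => Rabs (h p x)) J + eps.
Proof.
  intros He. induction L as [|p L IH].
  - exists nil. intros; contradiction.
  - destruct IH as [J1 H1]. destruct (tsum_approx (h p) eps He) as [J2 H2].
    exists (J1 ++ J2). intros J HJ Hi q [<-|Hq].
    + apply H2; auto. intros x Hx; apply Hi, in_or_app; auto.
    + apply H1; auto. intros x Hx; apply Hi, in_or_app; auto.
Qed.

Lemma tsum_bound {T} (f : T -> R) M :
  (forall F, NoDup F -> lsum (fun x => Rabs (f x)) F <= M) -> Rabs (tsum f) <= M.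
Proof.
  intros H. apply Rnot_lt_le; intros Hlt.
  set (eps := (Rabs (tsum f) - M) / 2).
  destruct (tsum_approx f eps) as [J0 HJ]. unfold eps; lra.
  destruct (nodup_ex J0) as [J [HJn [Hi _]]].
  specialize (HJ J HJn Hi). specialize (H J HJn). unfold eps in *; lra.
Qed.

Lemma lsum_le_tsum {T} (f : T -> R) F : (forall x, 0 <= f x) -> (exists S, has_sum f S) ->
  NoDup F -> lsum f F <= tsum f.
Proof.
  intros Hf Hs HF. pose proof (tsum_spec f Hs) as Ht.
  apply Rnot_lt_le; intros Hlt.
  destruct (Ht (lsum f F - tsum f)) as [F0 H0]. lra.
  destruct (nodup_ex (F ++ F0)) as [G [HG [Hi1 Hi2]]].
  assert (lsum f F <= lsum f G) by (apply lsum_incl; auto; intros x Hx; apply Hi1, in_or_app; auto).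
  specialize (H0 G HG (fun x Hx => Hi1 x (in_or_app _ _ _ (or_intror Hx)))).
  apply Rabs_def2 in H0. lra.
Qed.

Lemma summable_bounded {T} (f : T -> R) M : (forall x, 0 <= f x) ->
  (forall F, NoDup F -> lsum f F <= M) -> exists S, has_sum f S.
Proof.
  intros Hf HM.
  set (E := fun x => exists F, NoDup F /\ x = lsum f F).
  assert (Hb : bound E) by (exists M; intros x [F [HF ->]]; auto).
  assert (He : exists x, E x) by (exists 0; exists nil; split; [constructor|reflexivity]).
  destruct (completeness E Hb He) as [S [HS1 HS2]].
  exists S. intros eps Heps.
  destruct (classic (exists F0, NoDup F0 /\ S - eps < lsum f F0)) as [[F0 [HF0 Hl]]|Hn].
  - exists F0. intros F HF Hi.
    assert (lsum f F0 <= lsum f F) by (apply lsum_incl; auto).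
    assert (lsum f F <= S) by (apply HS1; exists F; auto).
    apply Rabs_def1; lra.
  - exfalso. assert (S <= S - eps); [|lra].
    apply HS2. intros x [F [HF ->]]. apply Rnot_lt_le; intros Hc. apply Hn; exists F; split; auto.
Qed.


Lemma amgm (p q t : R) : 0 < t -> p * q <= (t * p^2 + q^2 / t) / 2.
Proof. intros Ht.
  assert (0 <= (t * p - q)^2 / t) by (apply Rmult_le_pos; [apply pow2_ge_0| left; apply Rinv_0_lt_compat; auto]).
  assert ((t * p - q)^2 / t = t * p^2 - 2 * p * q + q^2 / t) by (field; lra). lra. Qed.

Lemma opt_t (S Y Z : R) : 0 <= Y -> 0 <= Z -> (forall t, 0 < t -> S <= (t * Y + Z / t) / 2) ->
  S <= sqrt (Y * Z).
Proof.
  intros HY HZ H.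
  destruct (Rle_lt_or_eq_dec 0 Y HY) as [Yp|Y0]; destruct (Rle_lt_or_eq_dec 0 Z HZ) as [Zp|Z0].
  - specialize (H (sqrt Z / sqrt Y)).
    assert (sY : 0 < sqrt Y) by (apply sqrt_lt_R0; auto).
    assert (sZ : 0 < sqrt Z) by (apply sqrt_lt_R0; auto).
    assert (0 < sqrt Z / sqrt Y) by (apply Rdiv_lt_0_compat; auto).
    specialize (H H0). rewrite sqrt_mult by lra.
    pose proof (sqrt_sqrt Y HY). pose proof (sqrt_sqrt Z HZ).
    assert (E : (sqrt Z / sqrt Y * Y + Z / (sqrt Z / sqrt Y)) / 2 = sqrt Y * sqrt Z).
    { rewrite <- (sqrt_sqrt Y HY) at 2. rewrite <- (sqrt_sqrt Z HZ) at 2. field. lra. }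
    lra.
  - subst Z. rewrite Rmult_0_r, sqrt_0. apply Rnot_lt_le; intros Hs.
    specialize (H (S / (Y + 1))). assert (0 < S / (Y+1)) by (apply Rdiv_lt_0_compat; lra).
    specialize (H H0). replace ((S / (Y + 1) * Y + 0 / (S / (Y + 1))) / 2) with (S * (Y / (Y+1)) / 2) in H by (field; lra).
    assert (Y / (Y+1) < 1) by (apply Rmult_lt_reg_r with (Y+1); [lra|]; field_simplify; lra).
    nra.
  - subst Y. rewrite Rmult_0_l, sqrt_0. apply Rnot_lt_le; intros Hs.
    specialize (H ((Z + 1) / S)). assert (0 < (Z+1) / S) by (apply Rdiv_lt_0_compat; lra).
    specialize (H H0). replace (((Z + 1) / S * 0 + Z / ((Z + 1) / S)) / 2) with (S * (Z / (Z+1)) / 2) in H by (field; lra).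
    assert (Z / (Z+1) < 1) by (apply Rmult_lt_reg_r with (Z+1); [lra|]; field_simplify; lra).
    nra.
  - subst. rewrite Rmult_0_l, sqrt_0. specialize (H 1 Rlt_0_1). lra.
Qed.

Lemma cs_bound {T} (a b : T -> R) (A B : R) : (forall x, 0 <= a x) -> (forall x, 0 <= b x) ->
  (forall F, NoDup F -> lsum a F <= A) -> (forall F, NoDup F -> lsum b F <= B) ->
  forall F, NoDup F -> lsum (fun x => sqrt (a x) * sqrt (b x)) F <= sqrt (A * B).
Proof.
  intros Ha Hb HA HB F HF.
  assert (0 <= A) by (specialize (HA nil (NoDup_nil _)); simpl in HA; unfold lsum in HA; simpl in HA; lra).
  assert (0 <= B) by (specialize (HB nil (NoDup_nil _)); simpl in HB; unfold lsum in HB; simpl in HB; lra).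
  apply opt_t; auto. intros t Ht.
  eapply Rle_trans. apply lsum_le. intros x _. apply (amgm _ _ t Ht).
  rewrite (lsum_ext _ (fun x => (t/2) * a x + (1/(2*t)) * b x)).
  2:{ intros x _. rewrite !pow2_sqrt by auto. field. lra. }
  rewrite lsum_plus, !lsum_scal.
  specialize (HA F HF). specialize (HB F HF).
  assert (0 < 1 / (2*t)) by (apply Rdiv_lt_0_compat; lra).
  replace ((t * A + B / t) / 2) with (t/2 * A + 1/(2*t) * B) by (field; lra).
  apply Rplus_le_compat; apply Rmult_le_compat_l; lra.
Qed.

Section Young.
Context {T : Type} (sub : T -> T -> T)
  (inj1 : forall k j j', sub k j = sub k j' -> j = j')
  (inj2 : forall k k' j, sub k j = sub k' j -> k = k').

Lemma young1 (a b c : T -> R) (A B Cc : R) :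
  (forall x, 0 <= a x) -> (forall x, 0 <= b x) -> (forall x, 0 <= c x) ->
  (forall F, NoDup F -> lsum (fun x => a x ^ 2) F <= A) ->
  (forall F, NoDup F -> lsum b F <= B) ->
  (forall F, NoDup F -> lsum (fun x => c x ^ 2) F <= Cc) ->
  forall K J, NoDup K -> NoDup J ->
  lsum (fun k => lsum (fun j => c k * b j * a (sub k j)) J) K <= sqrt ((B * A) * (B * Cc)).
Proof.
  intros Ha Hb Hc HA HB HC K J HK HJ.
  assert (0 <= B) by (specialize (HB nil (NoDup_nil _)); unfold lsum in HB; simpl in HB; lra).
  apply opt_t.
  { specialize (HA nil (NoDup_nil _)); unfold lsum in HA; simpl in HA; nra. }
  { specialize (HC nil (NoDup_nil _)); unfold lsum in HC; simpl in HC; nra. }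
  intros t Ht.
  eapply Rle_trans. apply lsum_le. intros k _. apply lsum_le. intros j _.
  assert (c k * b j * a (sub k j) <= b j * ((t * a (sub k j) ^ 2 + c k ^ 2 / t) / 2)).
  { pose proof (amgm (a (sub k j)) (c k) t Ht). specialize (Hb j). nra. }
  exact H0.
  rewrite (lsum_ext _ (fun k => (t/2) * lsum (fun j => b j * a (sub k j) ^ 2) J
      + (1/(2*t)) * (c k ^ 2 * lsum b J))).
  2:{ intros k _. rewrite <- !lsum_scal, <- lsum_plus. apply lsum_ext; intros j _. field; lra. }
  rewrite lsum_plus, !lsum_scal.
  rewrite (lsum_ext (fun k => c k ^ 2 * lsum b J) (fun k => lsum b J * c k ^ 2)) by (intros; lra).
  rewrite lsum_scal. rewrite lsum_swap.
  assert (lsum (fun j => lsum (fun k => b j * a (sub k j) ^ 2) K) J <= B * A).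
  { eapply Rle_trans. apply lsum_le. intros j _. rewrite lsum_scal.
    apply Rmult_le_compat_l. apply Hb.
    rewrite <- (lsum_map (fun x => a x ^ 2) (fun k => sub k j)). apply HA.
    apply map_NoDup_inj; auto. intros; eapply inj2; eauto.
    rewrite (lsum_ext _ (fun j => A * b j)) by (intros; lra). rewrite lsum_scal.
    specialize (HB J HJ). specialize (HA nil (NoDup_nil _)); unfold lsum in HA; simpl in HA; nra. }
  assert (lsum b J * lsum (fun k => c k ^ 2) K <= B * Cc).
  { apply Rmult_le_compat; auto. apply lsum_nonneg; auto. apply lsum_nonneg; intros; nra. }
  assert (0 < 1/(2*t)) by (apply Rdiv_lt_0_compat; lra).
  replace ((t * (B * A) + B * Cc / t) / 2) with (t/2 * (B*A) + 1/(2*t) * (B*Cc)) by (field; lra).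
  apply Rplus_le_compat; apply Rmult_le_compat_l; lra.
Qed.

Lemma young2 (a b c : T -> R) (A B Cc : R) :
  (forall x, 0 <= a x) -> (forall x, 0 <= b x) -> (forall x, 0 <= c x) ->
  (forall F, NoDup F -> lsum (fun x => a x ^ 2) F <= A) ->
  (forall F, NoDup F -> lsum b F <= B) ->
  (forall F, NoDup F -> lsum (fun x => c x ^ 2) F <= Cc) ->
  forall K J, NoDup K -> NoDup J ->
  lsum (fun k => lsum (fun j => c k * a j * b (sub k j)) J) K <= sqrt ((B * A) * (B * Cc)).
Proof.
  intros Ha Hb Hc HA HB HC K J HK HJ.
  assert (0 <= B) by (specialize (HB nil (NoDup_nil _)); unfold lsum in HB; simpl in HB; lra).
  apply opt_t.
  { specialize (HA nil (NoDup_nil _)); unfold lsum in HA; simpl in HA; nra. }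
  { specialize (HC nil (NoDup_nil _)); unfold lsum in HC; simpl in HC; nra. }
  intros t Ht.
  eapply Rle_trans. apply lsum_le. intros k _. apply lsum_le. intros j _.
  assert (c k * a j * b (sub k j) <= b (sub k j) * ((t * a j ^ 2 + c k ^ 2 / t) / 2)).
  { pose proof (amgm (a j) (c k) t Ht). specialize (Hb (sub k j)). nra. }
  exact H0.
  rewrite (lsum_ext _ (fun k => (t/2) * lsum (fun j => b (sub k j) * a j ^ 2) J
      + (1/(2*t)) * (c k ^ 2 * lsum (fun j => b (sub k j)) J))).
  2:{ intros k _. rewrite <- !lsum_scal, <- lsum_plus.
      apply lsum_ext; intros j _. field; lra. }
  rewrite lsum_plus, !lsum_scal.
  rewrite lsum_swap.
  assert (lsum (fun j => lsum (fun k => b (sub k j) * a j ^ 2) K) J <= B * A).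
  { eapply Rle_trans. apply lsum_le. intros j _.
    rewrite (lsum_ext _ (fun k => a j ^ 2 * b (sub k j))) by (intros; lra). rewrite lsum_scal.
    apply Rmult_le_compat_l. nra.
    rewrite <- (lsum_map b (fun k => sub k j)). apply HB.
    apply map_NoDup_inj; auto. intros; eapply inj2; eauto.
    rewrite (lsum_ext _ (fun j => B * a j ^ 2)) by (intros; lra). rewrite lsum_scal.
    specialize (HA J HJ). apply Rmult_le_compat_l; auto. }
  assert (lsum (fun k => c k ^ 2 * lsum (fun j => b (sub k j)) J) K <= B * Cc).
  { eapply Rle_trans. apply lsum_le. intros k _. apply Rmult_le_compat_l. nra.
    rewrite <- (lsum_map b (fun j => sub k j)). apply HB.
    apply map_NoDup_inj; auto. intros; eapply inj1; eauto.
    rewrite (lsum_ext _ (fun k => B * c k ^ 2)) by (intros; lra). rewrite lsum_scal.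
    specialize (HC K HK). apply Rmult_le_compat_l; auto. }
  assert (0 < 1/(2*t)) by (apply Rdiv_lt_0_compat; lra).
  replace ((t * (B * A) + B * Cc / t) / 2) with (t/2 * (B*A) + 1/(2*t) * (B*Cc)) by (field; lra).
  apply Rplus_le_compat; apply Rmult_le_compat_l; lra.
Qed.
End Young.


Lemma Rpower_one s : Rpower 1 s = 1.
Proof. unfold Rpower. rewrite ln_1, Rmult_0_r, exp_0. auto. Qed.
Lemma Rpower_pos x s : 0 < Rpower x s.
Proof. unfold Rpower. apply exp_pos. Qed.

Lemma Rpower_pow3 x : 0 < x -> Rpower x (1/3) ^ 3 = x.
Proof. intros Hx. rewrite <- Rpower_pow by apply Rpower_pos. rewrite Rpower_mult.
  replace (1/3 * INR 3) with 1 by (simpl; field). apply Rpower_1; auto. Qed.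

Lemma exp_le x y : x <= y -> exp x <= exp y.
Proof. intros [H|H]; [left; apply exp_increasing; auto| subst; lra]. Qed.
Lemma ln_le x y : 0 < x -> x <= y -> ln x <= ln y.
Proof. intros Hx [H|H]; [left; apply ln_increasing; auto| subst; lra]. Qed.
Lemma Rpower_decr x y s : 0 < x <= y -> s <= 0 -> Rpower y s <= Rpower x s.
Proof. intros Hxy Hs. unfold Rpower. apply exp_le.
  assert (ln x <= ln y) by (apply ln_le; lra). nra. Qed.

Definition g1 (n : Z) : R := Rpower (1 + IZR n ^ 2) (-(2/3)).

Lemma g1_pos n : 0 <= g1 n.
Proof. left; apply Rpower_pos. Qed.

Lemma key_tel (y : R) : 1 <= y ->
  Rpower (1 + (y+1)^2) (-(2/3)) <= 3 * (Rpower y (-(1/3)) - Rpower (y+1) (-(1/3))).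
Proof.
  intros Hy. set (x := y + 1).
  set (a := Rpower x (1/3)). set (b := Rpower y (1/3)).
  assert (Ha3 : a ^ 3 = x) by (apply Rpower_pow3; unfold x; lra).
  assert (Hb3 : b ^ 3 = y) by (apply Rpower_pow3; lra).
  assert (Ha : 0 < a) by apply Rpower_pos. assert (Hb : 0 < b) by apply Rpower_pos.
  assert (Hab : b <= a) by (apply Rle_Rpower_l; unfold x; lra).
  assert (Hb1 : 1 <= b).
  { rewrite <- (Rpower_one (1/3)). apply Rle_Rpower_l; lra. }
  eapply Rle_trans. apply Rpower_decr with (x := x ^ 2). split; [unfold x; nra| lra]. lra.
  rewrite !Rpower_Ropp. fold a b.
  assert (E : Rpower (x ^ 2) (2/3) = a ^ 4).
  { rewrite <- Ha3. rewrite <- pow_mult. simpl (3 * 2)%nat.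
    rewrite <- Rpower_pow by auto. rewrite Rpower_mult. rewrite <- Rpower_pow by auto.
    f_equal. simpl. field. }
  rewrite E.
  assert (H1 : 1 <= 3 * a^2 * (a - b)).
  { assert (a^3 - b^3 = 1) by (rewrite Ha3, Hb3; unfold x; lra).
    assert (a^3 - b^3 = (a - b) * (a^2 + a*b + b^2)) by ring.
    assert (a^2+a*b+b^2 <= 3*a^2) by nra.
    assert ((a-b) * (a^2+a*b+b^2) <= (a-b) * (3*a^2)) by (apply Rmult_le_compat_l; lra). nra. }
  assert (H2 : b <= 3 * a^3 * (a - b)) by nra.
  apply (Rmult_le_reg_r (a^4 * b)). apply Rmult_lt_0_compat; [apply pow_lt|]; auto.
  replace (/ a ^ 4 * (a ^ 4 * b)) with b by (field; lra).
  replace (3 * (/ b - / a) * (a ^ 4 * b)) with (3 * a^3 * (a - b)) by (field; lra).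
  nra.
Qed.

Lemma sum_pos_part (N : nat) :
  lsum g1 (map Z.of_nat (seq 1 (S N))) <= 4 - 3 * Rpower (INR (S N)) (-(1/3)).
Proof.
  induction N.
  - simpl. unfold lsum; simpl. rewrite Rpower_one. unfold g1.
    replace (1 + IZR 1 ^ 2) with 2 by (simpl; lra).
    assert (Rpower 2 (-(2/3)) <= 1).
    { rewrite <- (Rpower_one (-(2/3))). apply Rpower_decr; lra. } lra.
  - rewrite seq_S, map_app, lsum_app, (lsum_map g1 Z.of_nat (_ :: nil)), lsum_cons, lsum_nil.
    unfold g1 at 2. rewrite <- INR_IZR_INZ.
    replace (1 + S N)%nat with (S (S N)) by lia.
    rewrite !(S_INR (S N)).
    pose proof (key_tel (INR (S N))). 
    assert (1 <= INR (S N)) by (apply (le_INR 1); lia).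
    specialize (H H0). lra.
Qed.

Lemma g1_opp n : g1 (- n) = g1 n.
Proof. unfold g1. rewrite opp_IZR. f_equal. ring. Qed.

Lemma sum_range (N : nat) :
  lsum g1 (map Z.of_nat (seq 0 (S N)) ++ map (fun n => Z.opp (Z.of_nat n)) (seq 1 N)) <= 9.
Proof.
  rewrite lsum_app. simpl (seq 0 _). simpl map at 1. rewrite lsum_cons.
  rewrite (lsum_map g1 (fun n => Z.opp (Z.of_nat n))).
  rewrite (lsum_ext (fun x => g1 (- Z.of_nat x)) (fun x => g1 (Z.of_nat x))) by (intros; apply g1_opp).
  rewrite <- (lsum_map g1 Z.of_nat).
  assert (g1 0 = 1) by (unfold g1; simpl; replace (1 + 0*(0*1)) with 1 by ring; apply Rpower_one).
  destruct N.
  - simpl. unfold lsum; simpl. lra.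
  - pose proof (sum_pos_part N). pose proof (Rpower_pos (INR (S N)) (-(1/3))). lra.
Qed.

Lemma lattice1 (S : list Z) : NoDup S -> lsum g1 S <= 9.
Proof.
  intros HS.
  set (N := fold_right (fun s acc => (Z.to_nat (Z.abs s) + acc)%nat) 0%nat S).
  assert (HN : forall s, In s S -> (Z.to_nat (Z.abs s) <= N)%nat).
  { unfold N; clear. induction S; simpl; [tauto|]. intros s [->|H]; [lia|]. specialize (IHS s H). lia. }
  eapply Rle_trans; [|apply (sum_range N)].
  apply lsum_incl; auto. apply g1_pos.
  - apply NoDup_app.
    + apply map_NoDup_inj. intros; lia. apply seq_NoDup.
    + apply map_NoDup_inj. intros; lia. apply seq_NoDup.
    + intros a Ha Hb. apply in_map_iff in Ha, Hb. destruct Ha as [x [Ex Hx]]. destruct Hb as [y [Ey Hy]].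
      apply in_seq in Hy. lia.
  - intros s Hs. specialize (HN s Hs). apply in_or_app.
    destruct (Z_le_gt_dec 0 s).
    + left. apply in_map_iff. exists (Z.to_nat s). split; [lia|]. apply in_seq. lia.
    + right. apply in_map_iff. exists (Z.to_nat (- s)). split; [lia|]. apply in_seq. lia.
Qed.

Definition lprod {A B} (l1 : list A) (l2 : list B) : list (A * B) :=
  flat_map (fun a => map (fun b => (a, b)) l2) l1.

Lemma lprod_in {A B} (l1 : list A) (l2 : list B) a b : In a l1 -> In b l2 -> In (a, b) (lprod l1 l2).
Proof. intros H1 H2. unfold lprod. apply in_flat_map. exists a. split; auto. apply in_map; auto. Qed.

Lemma lprod_nodup {A B} (l1 : list A) (l2 : list B) : NoDup l1 -> NoDup l2 -> NoDup (lprod l1 l2).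
Proof. intros H1 H2. induction H1; simpl; [constructor|]. apply NoDup_app; auto.
  - apply map_NoDup_inj; auto. intros y z E; inversion E; auto.
  - intros p Hp Hq. apply in_map_iff in Hp. destruct Hp as [b [<- _]].
    unfold lprod in Hq. apply in_flat_map in Hq. destruct Hq as [a [Ha Hb]].
    apply in_map_iff in Hb. destruct Hb as [c [E _]]. inversion E; subst; contradiction.
Qed.

Lemma lsum_lprod {A B} (h1 : A -> R) (h2 : B -> R) l1 l2 :
  lsum (fun p => h1 (fst p) * h2 (snd p)) (lprod l1 l2) = lsum h1 l1 * lsum h2 l2.
Proof. induction l1. unfold lsum; simpl; lra.
  change (lprod (a::l1) l2) with (map (fun b => (a,b)) l2 ++ lprod l1 l2).
  rewrite lsum_app, IHl1, lsum_map, lsum_cons. simpl. rewrite lsum_scal. ring. Qed.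

Lemma prod_bound {A B} (h1 : A -> R) (h2 : B -> R) M1 M2 :
  (forall x, 0 <= h1 x) -> (forall x, 0 <= h2 x) ->
  (forall F, NoDup F -> lsum h1 F <= M1) -> (forall F, NoDup F -> lsum h2 F <= M2) ->
  forall P, NoDup P -> lsum (fun p => h1 (fst p) * h2 (snd p)) P <= M1 * M2.
Proof.
  intros H1 H2 HM1 HM2 P HP.
  destruct (nodup_ex (map fst P)) as [S1 [N1 [I1 _]]].
  destruct (nodup_ex (map snd P)) as [S2 [N2 [I2 _]]].
  eapply Rle_trans. apply (lsum_incl _ P (lprod S1 S2)); auto.
  intros; apply Rmult_le_pos; auto. apply lprod_nodup; auto.
  intros [a b] Hab. apply lprod_in. apply I1. apply in_map_iff. exists (a,b); auto.
  apply I2. apply in_map_iff. exists (a,b); auto.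
  rewrite lsum_lprod. apply Rmult_le_compat; try apply lsum_nonneg; auto.
Qed.


Lemma Zd_eq d (a b : Zd d) : (forall i, proj1_sig a i = proj1_sig b i) -> a = b.
Proof. destruct a as [fa pa], b as [fb pb]; simpl; intros H.
  assert (fa = fb) by (apply functional_extensionality; auto). subst.
  f_equal. apply Classical_Prop.proof_irrelevance. Qed.

Lemma sub_inj1 d (k j j' : Zd d) : Zd_sub d k j = Zd_sub d k j' -> j = j'.
Proof. intros E. apply Zd_eq. intros i. assert (H := f_equal (fun z => proj1_sig z i) E).
  simpl in H. lia. Qed.
Lemma sub_inj2 d (k k' j : Zd d) : Zd_sub d k j = Zd_sub d k' j -> k = k'.
Proof. intros E. apply Zd_eq. intros i. assert (H := f_equal (fun z => proj1_sig z i) E).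
  simpl in H. lia. Qed.

Lemma kcomp_sub d (k j : Zd d) i : kcomp (Zd_sub d k j) i = kcomp k i - kcomp j i.
Proof. unfold kcomp; simpl. apply minus_IZR. Qed.

Lemma Rsum2 f : Rsum_range 2 f = f 0%nat + f 1%nat.
Proof. unfold Rsum_range; simpl; ring. Qed.
Lemma Rsum3 f : Rsum_range 3 f = f 0%nat + f 1%nat + f 2%nat.
Proof. unfold Rsum_range; simpl; ring. Qed.

Lemma IZR_sq z : IZR z ^ 2 = 0 \/ 1 <= IZR z ^ 2.
Proof. destruct (Z.eq_dec z 0) as [->|H]. left; simpl; ring.
  right. destruct (Z_lt_le_dec 0 z).
  - assert (1 <= IZR z) by (apply IZR_le; lia). nra.
  - assert (IZR z <= -1) by (apply IZR_le; lia). nra. Qed.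

Lemma knorm2_ge0 d k : 0 <= knorm2 d k.
Proof. unfold knorm2, Rsum_range. induction (seq 0 d); cbn [fold_right]; [lra|]. pose proof (pow2_ge_0 (kcomp k a)). lra. Qed.

Lemma knorm2_ge1 d (hd : d = 2%nat \/ d = 3%nat) k : knorm2 d k <> 0 -> 1 <= knorm2 d k.
Proof. intros H. unfold knorm2 in *. unfold kcomp in *.
  destruct hd; subst; [rewrite Rsum2 in *|rewrite Rsum3 in *].
  - destruct (IZR_sq (proj1_sig k 0%nat)); destruct (IZR_sq (proj1_sig k 1%nat)); lra.
  - destruct (IZR_sq (proj1_sig k 0%nat)); destruct (IZR_sq (proj1_sig k 1%nat));
    destruct (IZR_sq (proj1_sig k 2%nat)); lra.
Qed.

Lemma knorm2_zero d (hd : d = 2%nat \/ d = 3%nat) k : knorm2 d k = 0 -> k = Zd_zero d.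
Proof. intros H. apply Zd_eq. intros i. simpl.
  destruct (le_lt_dec d i) as [Hi|Hi]. apply (proj2_sig k i Hi).
  unfold knorm2, kcomp in H.
  assert (Hz : forall z, IZR z ^ 2 = 0 -> z = 0%Z).
  { intros z Hz. apply eq_IZR. simpl in Hz. nra. }
  destruct hd; subst; [rewrite Rsum2 in H|rewrite Rsum3 in H];
  pose proof (pow2_ge_0 (IZR (proj1_sig k 0%nat)));
  pose proof (pow2_ge_0 (IZR (proj1_sig k 1%nat)));
  try pose proof (pow2_ge_0 (IZR (proj1_sig k 2%nat)));
  (destruct i as [|[|[|i]]]; [apply Hz; lra|apply Hz; lra| |lia]);
  try lia; apply Hz; lra.
Qed.

Lemma knorm_ge0 d k : 0 <= knorm d k.
Proof. apply sqrt_pos. Qed.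

Lemma tri_ineq (a1 a2 a3 b1 b2 b3 : R) :
  sqrt ((a1+b1)^2+(a2+b2)^2+(a3+b3)^2) <= sqrt (a1^2+a2^2+a3^2) + sqrt (b1^2+b2^2+b3^2).
Proof.
  set (Y := a1^2+a2^2+a3^2). set (Z := b1^2+b2^2+b3^2).
  assert (HY : 0 <= Y) by (unfold Y; nra). assert (HZ : 0 <= Z) by (unfold Z; nra).
  assert (T0 : 0 <= sqrt Y + sqrt Z) by (pose proof (sqrt_pos Y); pose proof (sqrt_pos Z); lra).
  rewrite <- (sqrt_pow2 _ T0). apply sqrt_le_1_alt.
  assert (Hd : Rabs (a1*b1+a2*b2+a3*b3) <= sqrt Y * sqrt Z).
  { rewrite <- sqrt_mult_alt by auto. rewrite <- sqrt_Rsqr_abs. apply sqrt_le_1_alt.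
    unfold Rsqr, Y, Z.
    assert ((a1^2+a2^2+a3^2)*(b1^2+b2^2+b3^2) - (a1*b1+a2*b2+a3*b3)*(a1*b1+a2*b2+a3*b3)
      = (a1*b2-a2*b1)^2 + (a1*b3-a3*b1)^2 + (a2*b3-a3*b2)^2) by ring.
    pose proof (pow2_ge_0 (a1*b2-a2*b1)). pose proof (pow2_ge_0 (a1*b3-a3*b1)).
    pose proof (pow2_ge_0 (a2*b3-a3*b2)). lra. }
  replace ((sqrt Y + sqrt Z)^2) with (Y + Z + 2 * (sqrt Y * sqrt Z)).
  2:{ simpl. rewrite Rmult_1_r. pose proof (sqrt_sqrt Y HY). pose proof (sqrt_sqrt Z HZ). nra. }
  pose proof (Rle_abs (a1*b1+a2*b2+a3*b3)).
  assert ((a1+b1)^2+(a2+b2)^2+(a3+b3)^2 = Y + Z + 2*(a1*b1+a2*b2+a3*b3)) by (unfold Y, Z; ring).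
  lra.
Qed.

Lemma knorm_tri d (hd : d = 2%nat \/ d = 3%nat) (k j : Zd d) :
  knorm d k <= knorm d j + knorm d (Zd_sub d k j).
Proof. unfold knorm, knorm2.
  destruct hd; subst; rewrite ?Rsum2, ?Rsum3; rewrite !kcomp_sub.
  - pose proof (tri_ineq (kcomp j 0) (kcomp j 1) 0 (kcomp k 0 - kcomp j 0) (kcomp k 1 - kcomp j 1) 0) as H.
    replace ((kcomp j 0 + (kcomp k 0 - kcomp j 0)) ^ 2 + (kcomp j 1 + (kcomp k 1 - kcomp j 1)) ^ 2 + (0 + 0) ^ 2)
      with (kcomp k 0 ^ 2 + kcomp k 1 ^ 2) in H by ring.
    replace (kcomp j 0 ^ 2 + kcomp j 1 ^ 2 + 0 ^ 2) with (kcomp j 0 ^ 2 + kcomp j 1 ^ 2) in H by ring.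
    replace ((kcomp k 0 - kcomp j 0) ^ 2 + (kcomp k 1 - kcomp j 1) ^ 2 + 0 ^ 2)
      with ((kcomp k 0 - kcomp j 0) ^ 2 + (kcomp k 1 - kcomp j 1) ^ 2) in H by ring. exact H.
  - pose proof (tri_ineq (kcomp j 0) (kcomp j 1) (kcomp j 2) (kcomp k 0 - kcomp j 0) (kcomp k 1 - kcomp j 1) (kcomp k 2 - kcomp j 2)) as H.
    replace ((kcomp j 0 + (kcomp k 0 - kcomp j 0)) ^ 2 + (kcomp j 1 + (kcomp k 1 - kcomp j 1)) ^ 2 + (kcomp j 2 + (kcomp k 2 - kcomp j 2)) ^ 2)
      with (kcomp k 0 ^ 2 + kcomp k 1 ^ 2 + kcomp k 2 ^ 2) in H by ring. exact H.
Qed.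

Lemma Rsum_lsum d f : Rsum_range d f = lsum f (seq 0 d).
Proof. reflexivity. Qed.

Lemma lsum_term {T} (f : T -> R) l i : In i l -> (forall x, 0 <= f x) -> f i <= lsum f l.
Proof. intros Hi Hf. induction l; [contradiction|]. rewrite lsum_cons. destruct Hi as [->|Hi].
  pose proof (lsum_nonneg f l Hf); lra. specialize (IHl Hi). specialize (Hf a). lra. Qed.

Lemma kcomp_sq_le d k i : (i < d)%nat -> kcomp k i ^ 2 <= knorm2 d k.
Proof. intros Hi. unfold knorm2. rewrite Rsum_lsum. apply (lsum_term (fun i => kcomp k i ^ 2)).
  apply in_seq; lia. intros; apply pow2_ge_0. Qed.

Lemma kcomp_abs_le d k i : (i < d)%nat -> Rabs (kcomp k i) <= knorm d k.
Proof. intros Hi. unfold knorm. rewrite <- sqrt_Rsqr_abs. apply sqrt_le_1_alt.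
  unfold Rsqr. pose proof (kcomp_sq_le d k i Hi). simpl in H. lra. Qed.

Lemma kcomp_prod_le d k i m : (i < d)%nat -> (m < d)%nat ->
  Rabs (kcomp k i) * Rabs (kcomp k m) <= knorm2 d k.
Proof. intros Hi Hm. pose proof (kcomp_sq_le d k i Hi). pose proof (kcomp_sq_le d k m Hm).
  rewrite <- (pow2_abs (kcomp k i)) in H. rewrite <- (pow2_abs (kcomp k m)) in H0.
  pose proof (pow2_ge_0 (Rabs (kcomp k i) - Rabs (kcomp k m))). nra. Qed.

Lemma lat_pt (s P r q n : R) : 1 <= s -> 0 < P -> ln P <= q * ln 2 + n * ln s ->
  (2/3) * q <= 2 -> (2/3) * n <= r -> Rpower s (-r) <= 4 * Rpower P (-(2/3)).
Proof.
  intros Hs HP Hl Hq Hn. unfold Rpower.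
  assert (L2 : 0 < ln 2) by (rewrite <- ln_1; apply ln_increasing; lra).
  assert (Ls : 0 <= ln s) by (rewrite <- ln_1; apply ln_le; lra).
  assert (E4 : 4 = exp (2 * ln 2)) by (replace (2 * ln 2) with (ln 2 + ln 2) by ring; rewrite exp_plus, exp_ln; lra).
  rewrite E4, <- exp_plus. apply exp_le. nra.
Qed.

Lemma g1_prod3 a b c : g1 a * (g1 b * g1 c) = Rpower ((1 + IZR a ^ 2) * ((1 + IZR b ^ 2) * (1 + IZR c ^ 2))) (-(2/3)).
Proof. unfold g1. assert (forall z, 0 < 1 + IZR z ^ 2) by (intros; pose proof (pow2_ge_0 (IZR z)); lra).
  rewrite !Rpower_mult_distr; auto. apply Rmult_lt_0_compat; auto. Qed.

Definition zc d (j : Zd d) i := proj1_sig j i.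

Lemma apow_lat_pt d (hd : d = 2%nat \/ d = 3%nat) r (Hr : (INR d + 1) / 2 < r) (j : Zd d) :
  Apow d j (-r) <= 4 * (g1 (zc d j 0) * (g1 (zc d j 1) * g1 (zc d j 2))).
Proof.
  unfold Apow. destruct (Req_EM_T (knorm2 d j) 0) as [E|E].
  - pose proof (g1_pos (zc d j 0)); pose proof (g1_pos (zc d j 1)); pose proof (g1_pos (zc d j 2)).
    apply Rmult_le_pos; [lra|]. repeat apply Rmult_le_pos; auto.
  - pose proof (knorm2_ge1 d hd j E) as H1. rewrite g1_prod3.
    assert (Hp : forall z, 0 < 1 + IZR z ^ 2) by (intros; pose proof (pow2_ge_0 (IZR z)); lra).
    assert (HP : 0 < (1 + IZR (zc d j 0) ^ 2) * ((1 + IZR (zc d j 1) ^ 2) * (1 + IZR (zc d j 2) ^ 2))).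
    { repeat apply Rmult_lt_0_compat; auto. }
    set (s := knorm2 d j) in *.
    assert (L2 : ln (2 * s) = ln 2 + ln s) by (apply ln_mult; lra).
    destruct hd; subst.
    + assert (Z2 : zc 2 j 2 = 0%Z) by (apply (proj2_sig j); lia). rewrite Z2 in *.
      apply (lat_pt s _ r 2 2); auto; [| lra | simpl in Hr; lra].
      assert (Hs : s = IZR (zc 2 j 0) ^ 2 + IZR (zc 2 j 1) ^ 2) by (unfold s, knorm2; rewrite Rsum2; reflexivity).
      assert (Hle : (1 + IZR (zc 2 j 0) ^ 2) * ((1 + IZR (zc 2 j 1) ^ 2) * (1 + IZR 0 ^ 2)) <= (2 * s) ^ 2).
      { rewrite Hs. simpl. pose proof (pow2_ge_0 (IZR (zc 2 j 0))). pose proof (pow2_ge_0 (IZR (zc 2 j 1))).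
        rewrite Hs in H1. simpl in H1. nra. }
      eapply Rle_trans. apply ln_le; [exact HP| exact Hle].
      rewrite ln_pow by lra. rewrite L2. simpl INR. lra.
    + apply (lat_pt s _ r 3 3); auto; [| lra | simpl in Hr; lra].
      assert (Hs : s = IZR (zc 3 j 0) ^ 2 + IZR (zc 3 j 1) ^ 2 + IZR (zc 3 j 2) ^ 2) by (unfold s, knorm2; rewrite Rsum3; reflexivity).
      assert (Hle : (1 + IZR (zc 3 j 0) ^ 2) * ((1 + IZR (zc 3 j 1) ^ 2) * (1 + IZR (zc 3 j 2) ^ 2)) <= (2 * s) ^ 3).
      { rewrite Hs. assert (H1' : 1 <= IZR (zc 3 j 0) ^ 2 + IZR (zc 3 j 1) ^ 2 + IZR (zc 3 j 2) ^ 2) by (rewrite <- Hs; lra).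
        set (x := IZR (zc 3 j 0) ^ 2) in *. set (y := IZR (zc 3 j 1) ^ 2) in *. set (z := IZR (zc 3 j 2) ^ 2) in *.
        assert (0 <= x) by apply pow2_ge_0. assert (0 <= y) by apply pow2_ge_0. assert (0 <= z) by apply pow2_ge_0.
        assert ((1 + x) * ((1 + y) * (1 + z)) <= (1 + (x+y+z))^3).
        { assert (0 <= x*y) by nra. assert (0 <= x*y*z) by nra. simpl. nra. }
        assert ((1 + (x+y+z))^3 <= (2 * (x+y+z))^3) by (apply pow_incr; split; lra). lra. }
      eapply Rle_trans. apply ln_le; [exact HP| exact Hle].
      rewrite ln_pow by lra. rewrite L2. simpl INR. lra.
Qed.

Lemma lattice d (hd : d = 2%nat \/ d = 3%nat) r (Hr : (INR d + 1) / 2 < r) :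
  forall J, NoDup J -> lsum (fun j => Apow d j (-r)) J <= 4 * (9 * (9 * 9)).
Proof.
  intros J HJ. eapply Rle_trans. apply lsum_le. intros j _. apply (apow_lat_pt d hd r Hr j).
  rewrite lsum_scal. apply Rmult_le_compat_l; [lra|].
  set (phi := fun j : Zd d => (zc d j 0, (zc d j 1, zc d j 2))).
  assert (E : lsum (fun j => g1 (zc d j 0) * (g1 (zc d j 1) * g1 (zc d j 2))) J = lsum (fun p => g1 (fst p) * (g1 (fst (snd p)) * g1 (snd (snd p)))) (map phi J)) by (rewrite lsum_map; reflexivity).
  rewrite E.
  apply (prod_bound g1 (fun q => g1 (fst q) * g1 (snd q))).
  - apply g1_pos.
  - intros; apply Rmult_le_pos; apply g1_pos.
  - apply lattice1.
  - apply prod_bound; auto using g1_pos, lattice1.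
  - apply map_NoDup_inj; auto. intros x y Exy. unfold phi in Exy. inversion Exy.
    apply Zd_eq. intros i. destruct i as [|[|[|i]]]; auto.
    rewrite (proj2_sig x), (proj2_sig y); auto; destruct hd; lia.
Qed.


Definition N1 (z : Defs.C) : R := Rabs (fst z) + Rabs (snd z).

Lemma N1_pos z : 0 <= N1 z.
Proof. unfold N1. pose proof (Rabs_pos (fst z)); pose proof (Rabs_pos (snd z)); lra. Qed.
Lemma N1_add a b : N1 (Cadd a b) <= N1 a + N1 b.
Proof. unfold N1, Cadd; simpl. pose proof (Rabs_triang (fst a) (fst b)); pose proof (Rabs_triang (snd a) (snd b)); lra. Qed.
Lemma N1_mul a b : N1 (Cmul a b) <= N1 a * N1 b.
Proof. unfold N1, Cmul; simpl.
  pose proof (Rabs_triang (fst a * fst b) (- (snd a * snd b))).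
  pose proof (Rabs_triang (fst a * snd b) (snd a * fst b)).
  rewrite Rabs_Ropp, !Rabs_mult in *.
  pose proof (Rabs_pos (fst a)); pose proof (Rabs_pos (snd a)); pose proof (Rabs_pos (fst b)); pose proof (Rabs_pos (snd b)).
  unfold Rminus. nra. Qed.
Lemma N1_conj a : N1 (Cconj a) = N1 a.
Proof. unfold N1, Cconj; simpl. rewrite Rabs_Ropp. auto. Qed.
Lemma N1_RtoC_mul c z : N1 (Cmul (RtoC c) z) = Rabs c * N1 z.
Proof. unfold N1, Cmul, RtoC; simpl. replace (c * fst z - 0 * snd z) with (c * fst z) by ring.
  replace (c * snd z + 0 * fst z) with (c * snd z) by ring. rewrite !Rabs_mult. ring. Qed.
Lemma N1_Ci_mul z : N1 (Cmul Ci z) <= N1 z.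
Proof. eapply Rle_trans. apply N1_mul. unfold N1, Ci; simpl. rewrite Rabs_R0, Rabs_R1. lra. Qed.
Lemma N1_C0 : N1 C0 = 0.
Proof. unfold N1, C0; simpl. rewrite Rabs_R0. lra. Qed.
Lemma N1_Csum d f : N1 (Csum_range d f) <= Rsum_range d (fun i => N1 (f i)).
Proof. unfold Csum_range, Rsum_range. induction (seq 0 d); cbn [fold_right].
  rewrite N1_C0; lra. eapply Rle_trans. apply N1_add. lra. Qed.
Lemma Cmod_le_N1 z : Cmod z <= N1 z.
Proof. unfold Cmod, Cnorm2, N1. rewrite <- (sqrt_pow2 (Rabs (fst z) + Rabs (snd z))).
  apply sqrt_le_1_alt. rewrite <- (pow2_abs (fst z)), <- (pow2_abs (snd z)).
  pose proof (Rabs_pos (fst z)); pose proof (Rabs_pos (snd z)). nra.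
  pose proof (Rabs_pos (fst z)); pose proof (Rabs_pos (snd z)). lra. Qed.
Lemma N1_le_Cnorm z : N1 z <= 2 * sqrt (Cnorm2 z).
Proof. unfold N1, Cnorm2.
  replace 2 with (sqrt 4) by (replace 4 with (2^2) by ring; apply sqrt_pow2; lra).
  rewrite <- sqrt_mult_alt by lra.
  rewrite <- (sqrt_pow2 (Rabs (fst z) + Rabs (snd z))).
  apply sqrt_le_1_alt. rewrite <- (pow2_abs (fst z)), <- (pow2_abs (snd z)).
  pose proof (pow2_ge_0 (Rabs (fst z) - Rabs (snd z))). nra.
  pose proof (Rabs_pos (fst z)); pose proof (Rabs_pos (snd z)). lra. Qed.

Lemma lsum_const {T} (c : R) (l : list T) : lsum (fun _ => c) l = INR (length l) * c.
Proof. induction l. unfold lsum; simpl; ring. rewrite lsum_cons, IHl. simpl length. rewrite S_INR. ring. Qed.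

Definition vn d (f : field d) k := sqrt (vnorm2 d f k).
Lemma vn_pos d f k : 0 <= vn d f k.
Proof. apply sqrt_pos. Qed.
Lemma vnorm2_ge0 d f k : 0 <= vnorm2 d f k.
Proof. unfold vnorm2. rewrite Rsum_lsum. apply lsum_nonneg. intros; unfold Cnorm2; nra. Qed.

Lemma N1_comp_le d (f : field d) k i : (i < d)%nat -> N1 (f k i) <= 2 * vn d f k.
Proof. intros Hi. eapply Rle_trans. apply N1_le_Cnorm. apply Rmult_le_compat_l; [lra|].
  apply sqrt_le_1_alt. unfold vnorm2. rewrite Rsum_lsum.
  apply (lsum_term (fun i => Cnorm2 (f k i))). apply in_seq; lia. intros; unfold Cnorm2; nra. Qed.

Definition gint d (u v : field d) (k : Zd d) (m : nat) (j : Zd d) : Defs.C :=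
  Cmul Ci (Cmul (Csum_range d (fun n => Cmul (u j n) (RtoC (kcomp (Zd_sub d k j) n))))
                (v (Zd_sub d k j) m)).

Lemma gint_bound d u v k m j : (m < d)%nat ->
  N1 (gint d u v k m j) <= 4 * INR d * (vn d u j * knorm d (Zd_sub d k j) * vn d v (Zd_sub d k j)).
Proof.
  intros Hm. unfold gint. eapply Rle_trans. apply N1_Ci_mul. eapply Rle_trans. apply N1_mul.
  pose proof (N1_comp_le d v (Zd_sub d k j) m Hm).
  assert (N1 (Csum_range d (fun n => Cmul (u j n) (RtoC (kcomp (Zd_sub d k j) n))))
          <= INR d * (2 * vn d u j * knorm d (Zd_sub d k j))).
  { eapply Rle_trans. apply N1_Csum. rewrite Rsum_lsum.
    eapply Rle_trans. apply lsum_le. intros n Hn. apply in_seq in Hn.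
    eapply Rle_trans. apply N1_mul.
    assert (N1 (RtoC (kcomp (Zd_sub d k j) n)) = Rabs (kcomp (Zd_sub d k j) n)) by (unfold N1, RtoC; simpl; rewrite Rabs_R0; lra).
    rewrite H0. apply Rmult_le_compat; auto using N1_pos, Rabs_pos.
    apply N1_comp_le; lia. apply kcomp_abs_le; lia.
    rewrite lsum_const, length_seq. lra. }
  pose proof (N1_pos (v (Zd_sub d k j) m)). pose proof (vn_pos d u j). pose proof (knorm_ge0 d (Zd_sub d k j)).
  pose proof (vn_pos d v (Zd_sub d k j)).
  pose proof (N1_pos (Csum_range d (fun n => Cmul (u j n) (RtoC (kcomp (Zd_sub d k j) n))))).
  assert (0 <= INR d) by apply pos_INR.
  eapply Rle_trans. apply Rmult_le_compat; eauto. nra.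
Qed.

Lemma leray_bound d k (a : nat -> Defs.C) i : (i < d)%nat ->
  N1 (leray d k a i) <= 2 * Rsum_range d (fun m => N1 (a m)).
Proof.
  intros Hi. unfold leray. assert (Hs : 0 <= Rsum_range d (fun m => N1 (a m))) by (rewrite Rsum_lsum; apply lsum_nonneg; intros; apply N1_pos).
  destruct (Req_EM_T (knorm2 d k) 0) as [E|E]. rewrite N1_C0; lra.
  assert (Hk : 0 < knorm2 d k) by (pose proof (knorm2_ge0 d k); lra).
  eapply Rle_trans. apply N1_add.
  assert (N1 (a i) <= Rsum_range d (fun m => N1 (a m))).
  { rewrite Rsum_lsum. apply (lsum_term (fun m => N1 (a m))). apply in_seq; lia. intros; apply N1_pos. }
  rewrite N1_RtoC_mul.
  assert (Rabs (- kcomp k i / knorm2 d k) * N1 (Csum_range d (fun m => Cmul (RtoC (kcomp k m)) (a m)))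
          <= Rsum_range d (fun m => N1 (a m))); [|lra].
  eapply Rle_trans. apply Rmult_le_compat_l. apply Rabs_pos. apply N1_Csum.
  rewrite !Rsum_lsum, <- lsum_scal. apply lsum_le. intros m Hm. apply in_seq in Hm.
  rewrite N1_RtoC_mul. unfold Rdiv. rewrite Rabs_mult, Rabs_Ropp, Rabs_inv, (Rabs_right (knorm2 d k)) by lra.
  pose proof (kcomp_prod_le d k i m Hi ltac:(lia)).
  pose proof (N1_pos (a m)). pose proof (Rabs_pos (kcomp k i)). pose proof (Rabs_pos (kcomp k m)).
  assert (0 < / knorm2 d k) by (apply Rinv_0_lt_compat; auto).
  replace (Rabs (kcomp k i) * / knorm2 d k * (Rabs (kcomp k m) * N1 (a m)))
    with ((Rabs (kcomp k i) * Rabs (kcomp k m)) * / knorm2 d k * N1 (a m)) by ring.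
  assert ((Rabs (kcomp k i) * Rabs (kcomp k m)) * / knorm2 d k <= 1).
  { apply (Rmult_le_reg_r (knorm2 d k)); auto. rewrite Rmult_assoc, Rinv_l by lra. lra. }
  nra.
Qed.


Lemma Apow_nonneg d k s : 0 <= Apow d k s.
Proof. unfold Apow. destruct (Req_EM_T _ _). lra. left; apply Rpower_pos. Qed.
Lemma gev_term_nonneg d r b a f k : 0 <= gev_term d r b a f k.
Proof. unfold gev_term. apply Rmult_le_pos. apply Rmult_le_pos. apply Apow_nonneg. left; apply exp_pos.
  apply vnorm2_ge0. Qed.

Lemma Rpower_sq s t : 0 < s -> Rpower s t = Rpower (sqrt s) (2 * t).
Proof. intros Hs. unfold Rpower. f_equal. rewrite <- (sqrt_sqrt s) at 1 by lra.
  rewrite ln_mult by (apply sqrt_lt_R0; auto). ring. Qed.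
Lemma sqrt_Rpower s t : 0 < s -> sqrt (Rpower s t) = Rpower (sqrt s) t.
Proof. intros Hs. rewrite Rpower_sq by auto. replace (2 * t) with (t + t) by ring.
  rewrite Rpower_plus. rewrite sqrt_square; auto. left; apply Rpower_pos. Qed.

Lemma G_formula d r b a f k : knorm2 d k <> 0 ->
  sqrt (gev_term d r b a f k) = Rpower (knorm d k) (r + 2 * a) * exp (b * knorm d k) * vn d f k.
Proof. intros H. pose proof (knorm2_ge0 d k). unfold gev_term, Apow.
  destruct (Req_EM_T _ _); [contradiction|].
  rewrite !sqrt_mult_alt. rewrite sqrt_Rpower by lra.
  replace (2 * b * knorm d k) with (b * knorm d k + b * knorm d k) by ring. rewrite exp_plus.
  rewrite sqrt_square by (left; apply exp_pos). reflexivity.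
  left; apply Rpower_pos. apply Rmult_le_pos; [left; apply Rpower_pos| left; apply exp_pos]. Qed.

Lemma Rpower_mono_base x y s : 0 <= s -> 0 < x -> x <= y -> Rpower x s <= Rpower y s.
Proof. intros. apply Rle_Rpower_l; auto. Qed.

Lemma coreQ (nk nj nl r b A B Cw : R) : 1 <= nk -> 1 <= nj -> 1 <= nl -> nk <= nj + nl ->
  1/2 < r -> 0 <= b -> 0 <= A -> 0 <= B -> 0 <= Cw ->
  Rpower nk (2*r) * exp (2*b*nk) * Cw * B * nl * A <= Rpower 2 r *
   ( (Rpower nk (r+2*(1/4)) * exp (b*nk) * Cw) * (exp (b*nj) * B) * (Rpower nl (r+2*(1/4)) * exp (b*nl) * A)
   + (Rpower nk (r+2*(1/4)) * exp (b*nk) * Cw) * (Rpower nj (r+2*(1/4)) * exp (b*nj) * B) * (exp (b*nl) * A)).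
Proof.
  intros Hk Hj Hl Htri Hr Hb HA HB HC.
  set (m := Rmax nj nl).
  assert (Hm1 : nj <= m) by apply Rmax_l. assert (Hm2 : nl <= m) by apply Rmax_r.
  assert (Claim : Rpower nk (r - 1/2) * nl <= Rpower 2 r * (Rpower nl (r+2*(1/4)) + Rpower nj (r+2*(1/4)))).
  { assert (Rpower nk (r - 1/2) <= Rpower (2 * m) (r - 1/2)) by (apply Rpower_mono_base; lra).
    rewrite <- Rpower_mult_distr in H by lra.
    assert (Rpower 2 (r - 1/2) <= Rpower 2 r) by (apply Rle_Rpower; lra).
    assert (Rpower m (r - 1/2) * nl <= Rpower m (r - 1/2) * m) by (apply Rmult_le_compat_l; [left; apply Rpower_pos|lra]).
    assert (E : Rpower m (r - 1/2) * m = Rpower m (r + 2*(1/4))).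
    { rewrite <- (Rpower_1 m) at 2 by lra. rewrite <- Rpower_plus. f_equal; field. }
    assert (Rpower m (r + 2*(1/4)) <= Rpower nl (r+2*(1/4)) + Rpower nj (r+2*(1/4))).
    { pose proof (Rpower_pos nl (r+2*(1/4))); pose proof (Rpower_pos nj (r+2*(1/4))).
      unfold m, Rmax. destruct (Rle_dec nj nl); lra. }
    pose proof (Rpower_pos m (r - 1/2)). pose proof (Rpower_pos 2 (r - 1/2)). pose proof (Rpower_pos 2 r).
    assert (Rpower nk (r - 1/2) * nl <= Rpower 2 (r - 1/2) * Rpower m (r - 1/2) * nl) by (apply Rmult_le_compat_r; lra).
    assert (Rpower 2 (r - 1/2) * (Rpower m (r - 1/2) * nl) <= Rpower 2 r * (Rpower m (r - 1/2) * nl)).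
    { apply Rmult_le_compat_r; [|lra]. apply Rmult_le_pos; lra. }
    nra. }
  assert (Hexp : exp (b * nk) <= exp (b * nj) * exp (b * nl)) by (rewrite <- exp_plus; apply exp_le; nra).
  assert (E2 : exp (2*b*nk) = exp (b*nk) * exp (b*nk)) by (rewrite <- exp_plus; f_equal; ring).
  assert (E3 : Rpower nk (2*r) = Rpower nk (r+2*(1/4)) * Rpower nk (r - 1/2)) by (rewrite <- Rpower_plus; f_equal; field).
  rewrite E2, E3.
  set (P := Rpower nk (r+2*(1/4)) * exp (b*nk) * Cw).
  assert (HP : 0 <= P) by (unfold P; pose proof (Rpower_pos nk (r+2*(1/4))); pose proof (exp_pos (b*nk)); apply Rmult_le_pos; [apply Rmult_le_pos|]; lra).
  replace (Rpower nk (r + 2 * (1 / 4)) * Rpower nk (r - 1 / 2) * (exp (b * nk) * exp (b * nk)) * Cw * B * nl * A)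
    with (P * (exp (b * nk) * B * A) * (Rpower nk (r - 1/2) * nl)) by (unfold P; ring).
  replace (Rpower 2 r * (P * (exp (b * nj) * B) * (Rpower nl (r + 2 * (1 / 4)) * exp (b * nl) * A) +
     P * (Rpower nj (r + 2 * (1 / 4)) * exp (b * nj) * B) * (exp (b * nl) * A)))
    with (P * (exp (b * nj) * exp (b * nl) * B * A) * (Rpower 2 r * (Rpower nl (r+2*(1/4)) + Rpower nj (r+2*(1/4))))) by ring.
  pose proof (exp_pos (b*nk)). pose proof (Rpower_pos nk (r - 1/2)).
  apply Rmult_le_compat; try lra.
  - apply Rmult_le_pos; [lra|]. apply Rmult_le_pos; [apply Rmult_le_pos|]; lra.
  - apply Rmult_le_pos; lra.
  - apply Rmult_le_compat_l; auto. apply Rmult_le_compat_r; auto. apply Rmult_le_compat_r; auto.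
Qed.

Lemma vn_zero d (f : field d) : (forall i, (i < d)%nat -> f (Zd_zero d) i = C0) -> vn d f (Zd_zero d) = 0.
Proof. intros H. unfold vn, vnorm2. rewrite Rsum_lsum.
  rewrite (lsum_ext _ (fun _ => 0)). rewrite lsum_const, Rmult_0_r. apply sqrt_0.
  intros i Hi. apply in_seq in Hi. rewrite H by lia. unfold Cnorm2, C0; simpl; ring. Qed.

Lemma knorm_ge1 d (hd : d = 2%nat \/ d = 3%nat) k : knorm2 d k <> 0 -> 1 <= knorm d k.
Proof. intros H. pose proof (knorm2_ge1 d hd k H). unfold knorm. rewrite <- sqrt_1. apply sqrt_le_1_alt; auto. Qed.

Lemma sqrt_Apow_neg d j r : knorm2 d j <> 0 -> sqrt (Apow d j (-r)) = Rpower (knorm d j) (-r).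
Proof. intros H. unfold Apow. destruct (Req_EM_T _ _); [contradiction|]. apply sqrt_Rpower.
  pose proof (knorm2_ge0 d j); lra. Qed.

Lemma pointwise d (hd : d = 2%nat \/ d = 3%nat) r beta (u v w : field d)
  (Hr : (INR d + 1) / 2 < r) (Hb : 0 < beta)
  (Hu : forall i, (i < d)%nat -> u (Zd_zero d) i = C0)
  (Hv : forall i, (i < d)%nat -> v (Zd_zero d) i = C0) (k j : Zd d) :
  (Apow d k r * exp (2*beta*knorm d k)) * vn d w k *
    (vn d u j * knorm d (Zd_sub d k j) * vn d v (Zd_sub d k j))
  <= Rpower 2 r * (sqrt (gev_term d r beta (1/4) w k) * (sqrt (gev_term d r beta 0 u j) * sqrt (Apow d j (-r)))
        * sqrt (gev_term d r beta (1/4) v (Zd_sub d k j))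
      + sqrt (gev_term d r beta (1/4) w k) * sqrt (gev_term d r beta (1/4) u j)
        * (sqrt (gev_term d r beta 0 v (Zd_sub d k j)) * sqrt (Apow d (Zd_sub d k j) (-r)))).
Proof.
  set (l := Zd_sub d k j).
  assert (HR : 0 <= Rpower 2 r * (sqrt (gev_term d r beta (1/4) w k) * (sqrt (gev_term d r beta 0 u j) * sqrt (Apow d j (-r)))
        * sqrt (gev_term d r beta (1/4) v l)
      + sqrt (gev_term d r beta (1/4) w k) * sqrt (gev_term d r beta (1/4) u j)
        * (sqrt (gev_term d r beta 0 v l) * sqrt (Apow d l (-r))))).
  { apply Rmult_le_pos. left; apply Rpower_pos. apply Rplus_le_le_0_compat; repeat apply Rmult_le_pos; apply sqrt_pos. }
  assert (Hr1 : 1/2 < r) by (destruct hd; subst; simpl in Hr; lra).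
  destruct (Req_EM_T (knorm2 d k) 0) as [Ek|Ek].
  { unfold Apow at 1. destruct (Req_EM_T _ _); [|contradiction]. rewrite !Rmult_0_l. auto. }
  destruct (Req_EM_T (knorm2 d j) 0) as [Ej|Ej].
  { apply knorm2_zero in Ej; auto. rewrite Ej in *. rewrite vn_zero by auto. rewrite !Rmult_0_l, Rmult_0_r. auto. }
  destruct (Req_EM_T (knorm2 d l) 0) as [El|El].
  { apply knorm2_zero in El; auto. rewrite El in *. rewrite vn_zero by auto. rewrite !Rmult_0_r. auto. }
  rewrite !G_formula by auto. rewrite !sqrt_Apow_neg by auto.
  assert (Ak : Apow d k r = Rpower (knorm d k) (2 * r)).
  { unfold Apow. destruct (Req_EM_T _ _); [contradiction|]. apply Rpower_sq. pose proof (knorm2_ge0 d k); lra. }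
  rewrite Ak.
  assert (X0 : forall z, knorm2 d z <> 0 -> forall f,
     Rpower (knorm d z) (r + 2 * 0) * exp (beta * knorm d z) * vn d f z * Rpower (knorm d z) (- r)
     = exp (beta * knorm d z) * vn d f z).
  { intros z Hz f. replace (Rpower (knorm d z) (r + 2 * 0) * exp (beta * knorm d z) * vn d f z * Rpower (knorm d z) (- r))
      with ((Rpower (knorm d z) (r + 2 * 0) * Rpower (knorm d z) (- r)) * (exp (beta * knorm d z) * vn d f z)) by ring.
    rewrite <- Rpower_plus. replace (r + 2 * 0 + - r) with 0 by ring. rewrite Rpower_O. ring.
    pose proof (knorm_ge1 d hd z Hz). lra. }
  rewrite !X0 by auto.
  pose proof (coreQ (knorm d k) (knorm d j) (knorm d l) r beta (vn d v l) (vn d u j) (vn d w k)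
    (knorm_ge1 d hd k Ek) (knorm_ge1 d hd j Ej) (knorm_ge1 d hd l El) (knorm_tri d hd k j) Hr1 ltac:(lra)
    (vn_pos d v l) (vn_pos d u j) (vn_pos d w k)) as H.
  lazymatch type of H with ?a <= ?b =>
    apply Rle_trans with a; [right; ring|]; apply Rle_trans with b; [exact H| right; ring] end.
Qed.


Lemma gev_le d (hd : d = 2%nat \/ d = 3%nat) r beta f k :
  gev_term d r beta 0 f k <= gev_term d r beta (1/4) f k.
Proof. unfold gev_term, Apow. destruct (Req_EM_T _ _) as [E|E]. lra.
  apply Rmult_le_compat_r. apply vnorm2_ge0. apply Rmult_le_compat_r. left; apply exp_pos.
  apply Rle_Rpower. apply knorm2_ge1; auto. lra. Qed.

Lemma tsum_nonneg {T} (f : T -> R) : (forall x, 0 <= f x) -> 0 <= tsum f.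
Proof. intros H. destruct (classic (exists S, has_sum f S)).
  apply (lsum_le_tsum f nil H H0 (NoDup_nil _)). rewrite tsum_not; auto; lra. Qed.

Lemma sq_bound {T} (f : T -> R) : (forall x, 0 <= f x) -> (exists S, has_sum f S) ->
  forall F, NoDup F -> lsum (fun x => sqrt (f x) ^ 2) F <= tsum f.
Proof. intros H1 H2 F HF. rewrite (lsum_ext _ f) by (intros; apply pow2_sqrt; auto).
  apply lsum_le_tsum; auto. Qed.

Lemma sqrt_prod_simpl B A Cc : 0 <= B -> 0 <= A -> 0 <= Cc ->
  sqrt ((B * A) * (B * Cc)) = B * sqrt (A * Cc).
Proof. intros. replace ((B * A) * (B * Cc)) with (B^2 * (A * Cc)) by ring.
  rewrite sqrt_mult_alt by nra. rewrite sqrt_pow2; auto. Qed.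

Section Main.
Variables (d : nat) (hd : d = 2%nat \/ d = 3%nat) (r beta : R) (u v w : field d)
  (Hr : (INR d + 1) / 2 < r) (Hb : 0 < beta)
  (Hu : forall i, (i < d)%nat -> u (Zd_zero d) i = C0)
  (Hv : forall i, (i < d)%nat -> v (Zd_zero d) i = C0)
  (Su1 : exists S, has_sum (gev_term d r beta (1/4) u) S)
  (Sv1 : exists S, has_sum (gev_term d r beta (1/4) v) S)
  (Sw1 : exists S, has_sum (gev_term d r beta (1/4) w) S)
  (Su0 : exists S, has_sum (gev_term d r beta 0 u) S)
  (Sv0 : exists S, has_sum (gev_term d r beta 0 v) S).

Definition Lc := 4 * (9 * (9 * 9)).
Let TU0 := tsum (gev_term d r beta 0 u).
Let TV0 := tsum (gev_term d r beta 0 v).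
Let TU1 := tsum (gev_term d r beta (1/4) u).
Let TV1 := tsum (gev_term d r beta (1/4) v).
Let TW1 := tsum (gev_term d r beta (1/4) w).

Definition M2 := Rpower 2 r * (sqrt (TU0 * Lc) * sqrt (TV1 * TW1) + sqrt (TV0 * Lc) * sqrt (TU1 * TW1)).

Lemma stepA : forall K J, NoDup K -> NoDup J ->
  lsum (fun k => (Apow d k r * exp (2*beta*knorm d k)) * vn d w k *
    lsum (fun j => vn d u j * knorm d (Zd_sub d k j) * vn d v (Zd_sub d k j)) J) K <= M2.
Proof.
  intros K J HK HJ.
  set (W1 := fun k => sqrt (gev_term d r beta (1/4) w k)).
  set (U1 := fun k => sqrt (gev_term d r beta (1/4) u k)).
  set (V1 := fun k => sqrt (gev_term d r beta (1/4) v k)).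
  set (x0 := fun j => sqrt (gev_term d r beta 0 u j) * sqrt (Apow d j (-r))).
  set (y0 := fun j => sqrt (gev_term d r beta 0 v j) * sqrt (Apow d j (-r))).
  apply Rle_trans with (lsum (fun k => Rpower 2 r * (lsum (fun j => W1 k * x0 j * V1 (Zd_sub d k j)) J
      + lsum (fun j => W1 k * U1 j * y0 (Zd_sub d k j)) J)) K).
  { apply lsum_le. intros k _. rewrite <- lsum_plus, <- !lsum_scal. apply lsum_le. intros j _.
    apply (pointwise d hd r beta u v w Hr Hb Hu Hv k j). }
  rewrite lsum_scal, lsum_plus. unfold M2. apply Rmult_le_compat_l. left; apply Rpower_pos.
  assert (nn : forall (f : Zd d -> R) x, 0 <= sqrt (f x)) by (intros; apply sqrt_pos).
  assert (Hg : forall a f x, 0 <= gev_term d r beta a f x) by (intros; apply gev_term_nonneg).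
  assert (HTU0 : 0 <= TU0) by (apply tsum_nonneg; auto).
  assert (HTV0 : 0 <= TV0) by (apply tsum_nonneg; auto).
  assert (HTU1 : 0 <= TU1) by (apply tsum_nonneg; auto).
  assert (HTV1 : 0 <= TV1) by (apply tsum_nonneg; auto).
  assert (HTW1 : 0 <= TW1) by (apply tsum_nonneg; auto).
  assert (HLc := lattice d hd r Hr).
  assert (Bx : forall F, NoDup F -> lsum x0 F <= sqrt (TU0 * Lc)).
  { apply cs_bound; auto. intros; apply Apow_nonneg. intros; apply lsum_le_tsum; auto. }
  assert (By : forall F, NoDup F -> lsum y0 F <= sqrt (TV0 * Lc)).
  { apply cs_bound; auto. intros; apply Apow_nonneg. intros; apply lsum_le_tsum; auto. }
  apply Rplus_le_compat.
  - pose proof (young1 (Zd_sub d) (sub_inj2 d) V1 x0 W1 TV1 (sqrt (TU0 * Lc)) TW1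
      (fun x => sqrt_pos _) (fun x => Rmult_le_pos _ _ (sqrt_pos _) (sqrt_pos _)) (fun x => sqrt_pos _)
      (sq_bound _ (Hg _ v) Sv1) Bx (sq_bound _ (Hg _ w) Sw1) K J HK HJ) as H.
    rewrite sqrt_prod_simpl in H by (auto; apply sqrt_pos). exact H.
  - pose proof (young2 (Zd_sub d) (sub_inj1 d) (sub_inj2 d) U1 y0 W1 TU1 (sqrt (TV0 * Lc)) TW1
      (fun x => sqrt_pos _) (fun x => Rmult_le_pos _ _ (sqrt_pos _) (sqrt_pos _)) (fun x => sqrt_pos _)
      (sq_bound _ (Hg _ u) Su1) By (sq_bound _ (Hg _ w) Sw1) K J HK HJ) as H.
    rewrite sqrt_prod_simpl in H by (auto; apply sqrt_pos). exact H.
Qed.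

Definition Sk (k : Zd d) : Defs.C :=
  Csum_range d (fun i => Cmul (Bhat d u v k i) (Cconj (gev_mult d r beta w k i))).

Lemma per_k (k : Zd d) (J : list (Zd d)) (eps' : R) :
  (forall m, (m < d)%nat -> N1 (tsumC (gint d u v k m)) <=
     4 * INR d * lsum (fun j => vn d u j * knorm d (Zd_sub d k j) * vn d v (Zd_sub d k j)) J + 2 * eps') ->
  N1 (Sk k) <= 16 * INR d ^ 3 * ((Apow d k r * exp (2*beta*knorm d k)) * vn d w k *
     lsum (fun j => vn d u j * knorm d (Zd_sub d k j) * vn d v (Zd_sub d k j)) J)
   + 8 * INR d ^ 2 * eps' * ((Apow d k r * exp (2*beta*knorm d k)) * vn d w k).
Proof.
  intros Ha.
  set (T := lsum (fun j => vn d u j * knorm d (Zd_sub d k j) * vn d v (Zd_sub d k j)) J).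
  set (mk := Apow d k r * exp (2*beta*knorm d k)).
  set (D := INR d).
  assert (Hmk : 0 <= mk) by (unfold mk; apply Rmult_le_pos; [apply Apow_nonneg| left; apply exp_pos]).
  assert (HD : 0 <= D) by apply pos_INR.
  assert (HT : 0 <= T) by (apply lsum_nonneg; intros; repeat apply Rmult_le_pos; auto using vn_pos, knorm_ge0).
  assert (Hvw := vn_pos d w k).
  assert (HA : Rsum_range d (fun m => N1 (tsumC (gint d u v k m))) <= D * (4 * D * T + 2 * eps')).
  { rewrite Rsum_lsum. eapply Rle_trans. apply lsum_le. intros m Hm. apply in_seq in Hm. apply Ha. lia.
    rewrite lsum_const, length_seq. unfold D, T. lra. }
  unfold Sk. eapply Rle_trans. apply N1_Csum. rewrite Rsum_lsum.
  eapply Rle_trans. apply lsum_le. intros i Hi. apply in_seq in Hi. eapply Rle_trans. apply N1_mul.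
  rewrite N1_conj. unfold gev_mult. rewrite N1_RtoC_mul. fold mk. rewrite (Rabs_right mk) by lra.
  change (Bhat d u v k i) with (leray d k (fun m => tsumC (gint d u v k m)) i).
  apply Rmult_le_compat; [apply N1_pos| apply Rmult_le_pos; auto using N1_pos| |].
  eapply Rle_trans. apply leray_bound. lia. apply Rmult_le_compat_l. lra. exact HA.
  apply Rmult_le_compat_l; auto. apply N1_comp_le. lia.
  rewrite lsum_const, length_seq. fold D.
  assert (0 <= eps' \/ eps' < 0) by lra.
  replace (D * (2 * (D * (4 * D * T + 2 * eps')) * (mk * (2 * vn d w k))))
    with (16 * D ^ 3 * (mk * vn d w k * T) + 8 * D ^ 2 * eps' * (mk * vn d w k)) by ring.
  lra.
Qed.

Lemma stepB : forall K, NoDup K -> lsum (fun k => N1 (Sk k)) K <= 16 * INR d ^ 3 * M2.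
Proof.
  intros K HK. apply Rle_plus_epsilon. intros eps He.
  set (D := INR d). assert (HD : 0 <= D) by apply pos_INR.
  set (Q := lsum (fun k => (Apow d k r * exp (2*beta*knorm d k)) * vn d w k) K).
  assert (HQ : 0 <= Q) by (apply lsum_nonneg; intros; apply Rmult_le_pos; [apply Rmult_le_pos; [apply Apow_nonneg| left; apply exp_pos]|apply vn_pos]).
  set (eps' := eps / (8 * D^2 * Q + 1)).
  assert (Hden : 0 < 8 * D^2 * Q + 1) by nra.
  assert (He' : 0 < eps') by (apply Rdiv_lt_0_compat; lra).
  assert (Hee : 8 * D^2 * eps' * Q <= eps).
  { unfold eps'. apply (Rmult_le_reg_r (8 * D^2 * Q + 1)); auto.
    replace (8 * D ^ 2 * (eps / (8 * D ^ 2 * Q + 1)) * Q * (8 * D ^ 2 * Q + 1)) with (eps * (8 * D^2 * Q)) by (field; lra).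
    nra. }
  set (h := fun (p : Zd d * (nat * bool)) (j : Zd d) =>
    if snd (snd p) then fst (gint d u v (fst p) (fst (snd p)) j) else snd (gint d u v (fst p) (fst (snd p)) j)).
  set (L := lprod K (lprod (seq 0 d) (true :: false :: nil))).
  destruct (tsum_approx_list h L eps' He') as [J0 HJ0].
  destruct (nodup_ex J0) as [J [HJ [Hi _]]].
  specialize (HJ0 J HJ Hi).
  eapply Rle_trans. apply lsum_le. intros k Hk. apply (per_k k J eps').
  - intros m Hm.
    assert (H1 := HJ0 (k, (m, true)) ltac:(apply lprod_in; auto; apply lprod_in; [apply in_seq; lia| left; auto])).
    assert (H2 := HJ0 (k, (m, false)) ltac:(apply lprod_in; auto; apply lprod_in; [apply in_seq; lia| right; left; auto])).
    unfold h in H1, H2; cbn [fst snd] in H1, H2.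
    unfold N1 at 1, tsumC; cbn [fst snd].
    assert (lsum (fun x => Rabs (fst (gint d u v k m x))) J + lsum (fun x => Rabs (snd (gint d u v k m x))) J
            <= 4 * D * lsum (fun j => vn d u j * knorm d (Zd_sub d k j) * vn d v (Zd_sub d k j)) J).
    { rewrite <- lsum_plus, <- lsum_scal. apply lsum_le. intros j _. apply gint_bound; auto. }
    unfold D in *. lra.
  - rewrite lsum_plus.
    rewrite !lsum_scal. fold Q. fold D.
    pose proof (stepA K J HK HJ).
    assert (0 <= 16 * D^3) by (apply Rmult_le_pos; [lra| apply pow_le; auto]).
    assert (16 * D ^ 3 * lsum (fun k => Apow d k r * exp (2 * beta * knorm d k) * vn d w k *
       lsum (fun j => vn d u j * knorm d (Zd_sub d k j) * vn d v (Zd_sub d k j)) J) K <= 16 * D^3 * M2)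
      by (apply Rmult_le_compat_l; auto).
    lra.
Qed.

Lemma final_bound : Cmod (inner d (Bhat d u v) (gev_mult d r beta w)) <= (2 * PI) ^ d * (2 * (16 * INR d ^ 3 * M2)).
Proof.
  eapply Rle_trans. apply Cmod_le_N1. unfold inner. rewrite N1_RtoC_mul.
  rewrite Rabs_right by (apply Rle_ge, pow_le; pose proof PI_RGT_0; lra).
  apply Rmult_le_compat_l. apply pow_le; pose proof PI_RGT_0; lra.
  change (tsumC (fun k => Csum_range d (fun i => Cmul (Bhat d u v k i) (Cconj (gev_mult d r beta w k i)))))
    with (tsumC Sk).
  unfold N1 at 1, tsumC; cbn [fst snd].
  assert (Rabs (tsum (fun x => fst (Sk x))) <= 16 * INR d ^ 3 * M2).
  { apply tsum_bound. intros F HF. eapply Rle_trans; [|apply (stepB F HF)]. apply lsum_le. intros x _.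
    unfold N1. pose proof (Rabs_pos (snd (Sk x))). lra. }
  assert (Rabs (tsum (fun x => snd (Sk x))) <= 16 * INR d ^ 3 * M2).
  { apply tsum_bound. intros F HF. eapply Rle_trans; [|apply (stepB F HF)]. apply lsum_le. intros x _.
    unfold N1. pose proof (Rabs_pos (fst (Sk x))). lra. }
  lra.
Qed.

End Main.


Theorem mainTheorem4 (d : nat) (hd : d = 2%nat \/ d = 3%nat) :
  exists Cst : R, 0 < Cst /\
    forall (r beta : R) (u v w : field d),
      (INR d + 1) / 2 < r -> 0 < beta ->
      in_HC d u -> in_HC d v -> in_HC d w ->
      gev_finite d r beta (1/4) u -> gev_finite d r beta (1/4) v ->
      gev_finite d r beta (1/4) w ->
      Cmod (inner d (Bhat d u v) (gev_mult d r beta w))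
      <= Cst * Rpower 2 r * C_W d r *
         (gev_norm d r beta 0 v * gev_norm d r beta (1/4) u * gev_norm d r beta (1/4) w
          + gev_norm d r beta 0 u * gev_norm d r beta (1/4) v * gev_norm d r beta (1/4) w).
Proof.
  pose proof PI_RGT_0 as Hpi. pose proof PI2_1 as Hpi2.
  exists (32 * 27 * 54 * (4 * PI)). split; [lra|].
  intros r beta u v w Hr Hb HCu HCv HCw Fu Fv Fw.
  assert (Hg : forall a f x, 0 <= gev_term d r beta a f x) by (intros; apply gev_term_nonneg).
  assert (S0 : forall f, gev_finite d r beta (1/4) f -> exists S, has_sum (gev_term d r beta 0 f) S).
  { intros f Ff. apply (summable_bounded _ (tsum (gev_term d r beta (1/4) f))); auto.
    intros F HF. eapply Rle_trans. apply lsum_le. intros; apply gev_le; auto.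
    apply lsum_le_tsum; auto. }
  pose proof (final_bound d hd r beta u v w Hr Hb (proj1 (proj2 HCu)) (proj1 (proj2 HCv))
     Fu Fv Fw (S0 u Fu) (S0 v Fv)) as H.
  unfold M2 in H. unfold gev_norm.
  set (P := (2 * PI) ^ d) in *.
  assert (HP1 : 1 <= P) by (unfold P; apply pow_R1_Rle; lra).
  set (TU0 := tsum (gev_term d r beta 0 u)) in *.
  set (TV0 := tsum (gev_term d r beta 0 v)) in *.
  set (TU1 := tsum (gev_term d r beta (1/4) u)) in *.
  set (TV1 := tsum (gev_term d r beta (1/4) v)) in *.
  set (TW1 := tsum (gev_term d r beta (1/4) w)) in *.
  assert (HTU0 : 0 <= TU0) by (apply tsum_nonneg; auto).
  assert (HTV0 : 0 <= TV0) by (apply tsum_nonneg; auto).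
  assert (HTU1 : 0 <= TU1) by (apply tsum_nonneg; auto).
  assert (HTV1 : 0 <= TV1) by (apply tsum_nonneg; auto).
  assert (HTW1 : 0 <= TW1) by (apply tsum_nonneg; auto).
  unfold Lc in H. set (Lv := 4 * (9 * (9 * 9))) in *.
  rewrite !sqrt_mult_alt in * by (unfold Lv; lra).
  set (sL := sqrt Lv) in *.
  assert (HsL : sL <= 54).
  { unfold sL, Lv. rewrite <- (sqrt_pow2 54) by lra. apply sqrt_le_1_alt. lra. }
  assert (HsL0 : 0 <= sL) by apply sqrt_pos.
  set (sP := sqrt P) in *.
  assert (HsP : P = sP * sP) by (unfold sP; rewrite sqrt_sqrt; lra).
  assert (HsP1 : 1 <= sP) by (unfold sP; rewrite <- sqrt_1; apply sqrt_le_1_alt; lra).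
  set (X := sqrt TU0 * sqrt TV1 * sqrt TW1 + sqrt TV0 * sqrt TU1 * sqrt TW1).
  assert (HX : 0 <= X) by (unfold X; pose proof (sqrt_pos TU0); pose proof (sqrt_pos TV1); pose proof (sqrt_pos TW1);
     pose proof (sqrt_pos TV0); pose proof (sqrt_pos TU1); apply Rplus_le_le_0_compat; repeat apply Rmult_le_pos; auto).
  set (E := Rpower 2 r) in *. assert (HE : 0 < E) by apply Rpower_pos.
  set (D := INR d) in *.
  assert (HD : 0 <= D <= 3) by (unfold D; destruct hd; subst; simpl; lra).
  assert (HCW : / (4 * PI) <= C_W d r).
  { unfold C_W. fold D.
    assert (h2 : 2 ^ (d - 1) <= 4) by (destruct hd; subst; simpl; lra).
    assert (h2' : 1 <= 2 ^ (d - 1)) by (apply pow_R1_Rle; lra).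
    assert (Hr' : 0 < 2 * r - 1 - D) by (unfold D in *; lra).
    assert (1 <= (2 * r - D) / (2 * r - 1 - D)).
    { apply (Rmult_le_reg_r (2 * r - 1 - D)); auto. field_simplify; lra. }
    assert (/ (4 * PI) <= / (PI * 2 ^ (d - 1))).
    { apply Rinv_le_contravar. nra. nra. }
    assert (0 < / (PI * 2 ^ (d - 1))) by (apply Rinv_0_lt_compat; nra).
    nra. }
  eapply Rle_trans. exact H.
  assert (EL : P * (2 * (16 * D ^ 3 * (E * (sqrt TU0 * sL * (sqrt TV1 * sqrt TW1) + sqrt TV0 * sL * (sqrt TU1 * sqrt TW1)))))
    = (32 * D^3 * P * sL) * (E * X)) by (unfold X; ring).
  assert (ER : 32 * 27 * 54 * (4 * PI) * E * C_W d r *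
     (sP * sqrt TV0 * (sP * sqrt TU1) * (sP * sqrt TW1) + sP * sqrt TU0 * (sP * sqrt TV1) * (sP * sqrt TW1))
     = (32 * 27 * 54 * (4 * PI) * C_W d r * (sP * sP * sP)) * (E * X)) by (unfold X; ring).
  rewrite EL, ER.
  apply Rmult_le_compat_r. apply Rmult_le_pos; lra.
  assert (HD3 : D ^ 3 <= 27) by (replace 27 with (3^3) by ring; apply pow_incr; lra).
  assert (HD30 : 0 <= D ^ 3) by (apply pow_le; lra).
  assert (HP3 : P <= sP * sP * sP) by nra.
  assert (Hk : 32 * 27 * 54 <= 32 * 27 * 54 * (4 * PI) * C_W d r).
  { assert (4 * PI * / (4 * PI) = 1) by (field; lra).
    assert (32 * 27 * 54 * (4 * PI) * / (4 * PI) <= 32 * 27 * 54 * (4 * PI) * C_W d r)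
      by (apply Rmult_le_compat_l; lra). nra. }
  assert (32 * D ^ 3 * P * sL <= 32 * 27 * 54 * (sP * sP * sP)).
  { assert (D ^ 3 * sL <= 27 * 54) by (apply Rmult_le_compat; lra).
    assert (0 <= D^3 * sL) by nra.
    assert (D ^ 3 * sL * P <= 27 * 54 * (sP * sP * sP)) by (apply Rmult_le_compat; lra). nra. }
  assert (0 <= sP * sP * sP) by nra.
  nra.
Qed.
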